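(* Let $p$ be an odd prime and $0\le k\le\frac{p-1}{2}$. Then $$\begin{bmatrix}\frac{p-1}{2}+k\\2k\end{bmatrix}_{q^2}\equiv(-1)^k\begin{bmatrix}2k\\k\end{bmatrix}_{q^2}\frac{q^{kp-k^2}}{(-q;q)_{2k}^2}\pmod{[p]^2}.$$
   Context: For an indeterminate $q$ and an integer $n\ge 0$: $(a;q)_0=1$ and $(a;q)_n=(1-a)(1-aq)\cdots(1-aq^{n-1})$. The $q$-binomial coefficient is $\begin{bmatrix}n\\k\end{bmatrix}_q=\frac{(q^{n-k+1};q)_k}{(q;q)_k}$ if $0\le k\le n$ and $0$ otherwise. For a positive integer $p$, $[p]=\frac{1-q^p}{1-q}=1+q+\cdots+q^{p-1}$. For a prime $p$, $[p]$ is irreducible in $\mathbb{Q}[q]$; for rational functions $A,B$ of $q$ whose denominators are coprime to $[p]$, $A\equiv B\pmod{[p]^r}$ means that $A-B$, written in lowest terms, has numerator divisible by $[p]^r$ in $\mathbb{Q}[q]$. *)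

(* Defs.v *)
From HB Require Import structures.
From mathcomp Require Import all_boot all_order all_algebra.
From mathcomp Require Import fraction.
Set Implicit Arguments. Unset Strict Implicit. Unset Printing Implicit Defensive.
Import Order.TTheory GRing.Theory Num.Theory.
Local Open Scope ring_scope.

(* Q(q): the field of rational functions in the indeterminate q over Q. *)
Notation RF := {fraction {poly rat}}.

Definition toRF (x : {poly rat}) : RF := @FracField.tofrac _ x.

Definition qX : RF := toRF 'X.

Definition qpoch (a b : RF) (n : nat) : RF := \prod_(i < n) (1 - a * b ^+ i).

Definition qbinom (b : RF) (n k : nat) : RF :=
  if (k <= n)%N then qpoch (b ^+ (n - k + 1)) b k / qpoch b b k else 0.

Definition qint (p : nat) : {poly rat} := \sum_(i < p) 'X^i.

(* A rational function whose denominator (in some, hence in lowest-terms,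
   representation) is coprime to m. *)
Definition den_coprime (m : {poly rat}) (x : RF) : Prop :=
  exists (n d : {poly rat}), d != 0 /\ coprimep d m /\ x = toRF n / toRF d.

(* A == B (mod m): both denominators coprime to m, and A - B written in lowest
   terms has numerator divisible by m.  (Equivalently: A - B = n/d with d coprime
   to m and m | n, since passing to lowest terms only divides n by a factor
   of d, which is coprime to m.) *)
Definition qcong (m : {poly rat}) (A B : RF) : Prop :=
  den_coprime m A /\ den_coprime m B /\
  exists (n d : {poly rat}), d != 0 /\ coprimep d m /\ (m %| n)%R /\ A - B = toRF n / toRF d.

(* Main.v *)
Require Import Defs.
From HB Require Import structures.
From mathcomp Require Import all_boot all_order all_algebra.
From mathcomp Require Import fraction.
From mathcomp Require Import ring zify.
Import Order.TTheory GRing.Theory Num.Theory.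
Local Open Scope ring_scope.

Lemma qint_mul p : qint p * ('X - 1) = 'X^p - 1.
Proof.
elim: p => [|p IH]; first by rewrite /qint big_ord0 mul0r expr0 subrr.
rewrite /qint big_ord_recr /= mulrDl -/(qint p) IH exprS; ring.
Qed.

Lemma dvd_Xgcd (g : {poly rat}) n : forall a b, (a + b <= n)%N ->
  g %| 'X^a - 1 -> g %| 'X^b - 1 -> g %| 'X^(gcdn a b) - 1.
Proof.
elim: n => [|n IH] a b.
  by rewrite leqn0 addn_eq0 => /andP[/eqP -> /eqP ->].
move=> hab.
wlog le_ab : a b hab / (a <= b)%N.
  move=> W ha hb; case: (leqP a b) => h; first exact: W.
  rewrite gcdnC; apply: W => //; first (by rewrite addnC); exact: ltnW.
move=> ha hb; case: (posnP a) => [a0|a0].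
  by rewrite a0 gcd0n.
have [c hc] : exists c, b = (a + c)%N by exists (b - a)%N; lia.
subst b.
rewrite gcdnDl; apply: IH; [lia | exact: ha |].
have -> : 'X^c - 1 = ('X^(a + c) - 1) - 'X^c * ('X^a - 1) :> {poly rat}.
  by rewrite exprD; ring.
by rewrite dvdp_sub // dvdp_mull.
Qed.

Lemma coprime_Xm (p m : nat) : prime p -> ~~ (p %| m)%N ->
  coprimep ('X^m - 1) (qint p).
Proof.
move=> pp npm; apply/coprimepP => d dm dP.
have dXp : d %| 'X^p - 1 by rewrite -qint_mul dvdp_mulr.
have g1 : gcdn m p = 1%N.
  by apply/eqP; rewrite gcdnC; have := prime_coprime m pp; rewrite npm /coprime => ->.
have dX1 := @dvd_Xgcd d _ m p (leqnn _) dm dXp; rewrite g1 expr1 in dX1.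
have cop : coprimep (qint p) ('X - 1%:P).
  rewrite coprimep_XsubC /root /qint horner_sum.
  under eq_bigr => i _ do rewrite hornerXn expr1n.
  by rewrite sumr_const card_ord pnatr_eq0 -lt0n prime_gt0.
by move/coprimepP: cop; apply => //; rewrite polyC1.
Qed.

Lemma coprime_1Xm (p m : nat) : prime p -> ~~ (p %| m)%N ->
  coprimep (1 - 'X^m) (qint p).
Proof.
move=> pp npm; have := @coprime_Xm p m pp npm => /coprimepP H.
apply/coprimepP => d d1 d2; apply: H => //.
by rewrite -dvdpNr opprB.
Qed.

Lemma coprime_1pXm (p m : nat) : prime p -> odd p -> (0 < m < p)%N ->
  coprimep (1 + 'X^m) (qint p).
Proof.
move=> pp op /andP[m0 mp].
have np : ~~ (p %| 2 * m)%N.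
  rewrite Euclid_dvdM // negb_or; apply/andP; split.
    apply/negP => /dvdn_leq h; have := h isT; have := prime_gt1 pp.
    case: p pp op {mp h} => [|[|[|p]]] //.
  by apply/negP => /dvdn_leq h; have := h m0; lia.
have := @coprime_1Xm p _ pp np.
have -> : 1 - 'X^(2 * m) = (1 + 'X^m) * (1 - 'X^m) :> {poly rat}.
  by rewrite mulnC exprM; ring.
by rewrite coprimepMl => /andP[].
Qed.

Lemma coprime_prod (P : {poly rat}) n (F : 'I_n -> {poly rat}) :
  (forall i, coprimep (F i) P) -> coprimep (\prod_(i < n) F i) P.
Proof.
move=> H; apply: (big_ind (fun x => coprimep x P)) => //.
- by rewrite coprime1p.
- by move=> x y hx hy; rewrite coprimepMl hx hy.
Qed.

Lemma dvd_prod_diff (d : {poly rat}) n (F G : nat -> {poly rat}) :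
  (forall i, (i < n)%N -> d %| F i - G i) ->
  d %| \prod_(i < n) F i - \prod_(i < n) G i.
Proof.
elim: n => [|n IH] H; first by rewrite !big_ord0 subrr dvdp0.
rewrite !big_ord_recr /=.
have -> : (\prod_(i < n) F i) * F n - (\prod_(i < n) G i) * G n =
  (\prod_(i < n) F i) * (F n - G n) + (\prod_(i < n) F i - \prod_(i < n) G i) * G n.
  ring.
apply: dvdp_add; [apply: dvdp_mull; exact: H | apply: dvdp_mulr; apply: IH => i hi; apply: H; exact: ltnW].
Qed.

Lemma oneX_neq0 m : (0 < m)%N -> (1 - 'X^m : {poly rat}) != 0.
Proof.
move=> m0; apply/eqP => h; have := congr1 (fun q : {poly rat} => q`_0) h.
rewrite coefB coef1 coefXn /= eq_sym eqn0Ngt m0 /= coef0 subr0.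
by move/eqP; rewrite oner_eq0.
Qed.

Lemma onepX_neq0 m : (0 < m)%N -> (1 + 'X^m : {poly rat}) != 0.
Proof.
move=> m0; apply/eqP => h; have := congr1 (fun q : {poly rat} => q`_0) h.
rewrite coefD coef1 coefXn /= eq_sym eqn0Ngt m0 /= coef0 addr0.
by move/eqP; rewrite oner_eq0.
Qed.

Definition Q1 m : {poly rat} := \prod_(i < m) (1 - 'X^(i.+1)).
Definition Q2 m : {poly rat} := \prod_(i < m) (1 - 'X^(2 + 2 * i)).
Definition EE m : {poly rat} := \prod_(i < m) (1 + 'X^(i.+1)).
Definition OO k : {poly rat} := \prod_(i < k) (1 - 'X^(2 * i + 1)).

Lemma Q1E m : Q1 m * EE m = Q2 m.
Proof.
rewrite /Q1 /EE /Q2 -big_split /=; apply: eq_bigr => i _.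
have -> : (2 + 2 * i = i.+1 * 2)%N by lia.
rewrite exprM; ring.
Qed.

Lemma Q1_double k : Q1 (2 * k) = OO k * Q2 k.
Proof.
elim: k => [|k IH]; first by rewrite /Q1 /OO /Q2 !big_ord0 mulr1.
have -> : (2 * k.+1 = (2 * k).+2)%N by lia.
rewrite /Q1 !big_ord_recr /= -/(Q1 (2 * k)) IH /OO /Q2 !big_ord_recr /=.
rewrite -/(OO k) -/(Q2 k) addn1.
have -> : ((2 * k).+2 = 2 + 2 * k)%N by lia.
ring.
Qed.

Lemma Q2_neq0 m : Q2 m != 0.
Proof. by apply/prodf_neq0 => i _; apply: oneX_neq0. Qed.

Lemma Q2_split k : Q2 (2 * k) = Q2 k * OO k * EE (2 * k).
Proof. rewrite -Q1E Q1_double; ring. Qed.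

Lemma N1_eq k : \prod_(i < k) (1 - 'X^(2 * (2 * k - k + 1) + 2 * i)) = OO k * EE (2 * k) :> {poly rat}.
Proof.
have h1 : Q2 (2 * k) = Q2 k * \prod_(i < k) (1 - 'X^(2 * (2 * k - k + 1) + 2 * i)).
  rewrite /Q2; have -> : (2 * k = k + k)%N by lia.
  rewrite big_split_ord /=; congr (_ * _); apply: eq_bigr => i _.
  by congr (1 - 'X^_); lia.
apply: (mulfI (Q2_neq0 k)); rewrite -h1 Q2_split; ring.
Qed.

Lemma NL_eq p n k : p = (2 * n + 1)%N -> (k <= n)%N ->
  \prod_(i < 2 * k) (1 - 'X^(2 * (n + k - 2 * k + 1) + 2 * i)) =
  \prod_(i < k) ((1 - 'X^(p - (2 * i + 1))) * (1 - 'X^(p + (2 * i + 1)))) :> {poly rat}.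
Proof.
move=> hp kn.
have -> : (2 * k = k + k)%N by lia.
rewrite big_split_ord /= big_split /=; congr (_ * _).
  rewrite (reindex_inj rev_ord_inj) /=; apply: eq_bigr => i _.
  by congr (1 - 'X^_); have := ltn_ord i; lia.
by apply: eq_bigr => i _; congr (1 - 'X^_); lia.
Qed.

Lemma sum_step k p : (2 * k.+1 <= p)%N ->
  (k.+1 * p - k.+1 ^ 2 = (k * p - k ^ 2) + (p - (2 * k + 1)))%N.
Proof. move=> h; nia. Qed.

Lemma prodB_eq p k : (2 * k <= p)%N ->
  \prod_(i < k) (- ('X^(p - (2 * i + 1)) * (1 - 'X^(2 * i + 1)) ^+ 2)) =
  (-1) ^+ k * 'X^(k * p - k ^ 2) * OO k ^+ 2 :> {poly rat}.
Proof.
elim: k => [|k IH] h; first by rewrite /OO !big_ord0 mul0n sub0n !expr0 expr1n !mulr1.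
rewrite big_ord_recr /= IH; last by lia.
rewrite sum_step // (exprD ('X : {poly rat}) (k * p - k ^ 2)) /OO big_ord_recr /= -/(OO k) (exprS (-1 : {poly rat})); ring.
Qed.

Lemma AB_dvd p i : (2 * i + 1 <= p)%N ->
  qint p ^+ 2 %| (1 - 'X^(p - (2 * i + 1))) * (1 - 'X^(p + (2 * i + 1)))
                 - (- ('X^(p - (2 * i + 1)) * (1 - 'X^(2 * i + 1)) ^+ 2)).
Proof.
move=> h.
have key : forall r c : nat, (1 - 'X^r) * (1 - 'X^(r + c + c)) - - ('X^r * (1 - 'X^c) ^+ 2)
   = ('X^(r + c) - 1) ^+ 2 :> {poly rat}.
  by move=> r c; rewrite !exprD; ring.
have e1 : (p + (2 * i + 1) = (p - (2 * i + 1)) + (2 * i + 1) + (2 * i + 1))%N by lia.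
have e2 : (p = (p - (2 * i + 1)) + (2 * i + 1))%N by lia.
by rewrite e1 key -e2 -qint_mul exprMn dvdp_mulr.
Qed.

Lemma qpochX a b m : qpoch (qX ^+ a) (qX ^+ b) m = toRF (\prod_(i < m) (1 - 'X^(a + b * i))).
Proof.
rewrite /qpoch /qX /toRF rmorph_prod; apply: eq_bigr => i _.
by rewrite rmorphB rmorph1 rmorphXn -exprM -exprD.
Qed.

Lemma qpochN m : qpoch (- qX) qX m = toRF (EE m).
Proof.
rewrite /qpoch /qX /EE /toRF rmorph_prod; apply: eq_bigr => i _.
by rewrite rmorphD rmorph1 rmorphXn mulNr opprK -exprS.
Qed.

Lemma qXe e : qX ^+ e = toRF 'X^e.
Proof. by rewrite /qX /toRF rmorphXn. Qed.

Lemma toRF_neq0 x : x != 0 -> toRF x != 0.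
Proof. by rewrite /toRF tofrac_eq0. Qed.

Lemma not_dvd2 p m : prime p -> odd p -> (0 < m < p)%N -> ~~ (p %| 2 * m)%N.
Proof.
move=> pp op /andP[m0 mp].
rewrite Euclid_dvdM // negb_or; apply/andP; split.
  apply/negP => /dvdn_leq h; have := h isT; have := prime_gt1 pp.
  case: p pp op {mp h} => [|[|[|p]]] //.
by apply/negP => /dvdn_leq h; have := h m0; lia.
Qed.

Lemma toRFM x y : toRF (x * y) = toRF x * toRF y.
Proof. by rewrite /toRF rmorphM. Qed.

Lemma toRFB x y : toRF (x - y) = toRF x - toRF y.
Proof. by rewrite /toRF rmorphB. Qed.

Lemma toRFX x n : toRF (x ^+ n) = toRF x ^+ n.
Proof. by rewrite /toRF rmorphXn. Qed.

Lemma fld1 (F : fieldType) (s o x d1 ee : F) : d1 != 0 -> ee != 0 ->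
  s * (o / d1) * x / ee ^+ 2 = (s * o * x) / (d1 * ee ^+ 2).
Proof. by move=> h1 h2; field; rewrite h1 h2. Qed.

Lemma fld2 (F : fieldType) (a b s o x d1 ee : F) : b != 0 -> d1 != 0 -> ee != 0 ->
  a / b - s * (o / d1) * x / ee ^+ 2 = (a * (d1 * ee ^+ 2) - s * o * x * b) / (b * (d1 * ee ^+ 2)).
Proof. by move=> h0 h1 h2; field; rewrite h0 h1 h2. Qed.

Theorem lemma3p1 (p k : nat) :
  prime p -> odd p -> (k <= (p - 1) %/ 2)%N ->
  qcong ((qint p) ^+ 2)
    (qbinom (qX ^+ 2) ((p - 1) %/ 2 + k) (2 * k))
    ((-1) ^+ k * qbinom (qX ^+ 2) (2 * k) k * qX ^+ (k * p - k ^ 2)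
       / (qpoch (- qX) qX (2 * k)) ^+ 2).
Proof.
move=> pp op.
have hp : p = (2 * ((p - 1) %/ 2) + 1)%N.
  have h := odd_double_half p; rewrite op in h; lia.
move: hp; set n := ((p - 1) %/ 2)%N => hp kn.
have c1 : (2 * k <= n + k)%N by lia.
have c2 : (k <= 2 * k)%N by lia.
rewrite /qbinom c1 c2 -!exprM !qpochX qpochN qXe.
rewrite (@NL_eq p n k hp kn) N1_eq -/(Q2 (2 * k)) -/(Q2 k).
have EEn0 : EE (2 * k) != 0.
  by apply/prodf_neq0 => i _; apply: onepX_neq0.
have cQ : forall m, (m <= 2 * k)%N -> coprimep (Q2 m) (qint p ^+ 2).
  move=> m hm; apply: coprimep_expr; apply: coprime_prod => i.
  have -> : (2 + 2 * i = 2 * i.+1)%N by lia.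
  apply: (@coprime_1Xm p _ pp); apply: not_dvd2 => //; have := ltn_ord i; lia.
have cE : coprimep (EE (2 * k)) (qint p ^+ 2).
  apply: coprimep_expr; apply: coprime_prod => i.
  apply: (@coprime_1pXm p _ pp op); have := ltn_ord i; lia.
have cQ2 := cQ _ (leqnn _).
have cQ1 := cQ _ c2.
have tr : toRF ((-1) ^+ k) = (-1) ^+ k.
  by rewrite /toRF rmorphXn rmorphN rmorph1.
split; [|split].
- exists (\prod_(i < k) ((1 - 'X^(p - (2 * i + 1))) * (1 - 'X^(p + (2 * i + 1))))), (Q2 (2 * k)).
  by split; [exact: Q2_neq0 | split].
- exists ((-1) ^+ k * (OO k * EE (2 * k)) * 'X^(k * p - k ^ 2)), (Q2 k * EE (2 * k) ^+ 2).
  split; first by rewrite mulf_neq0 ?Q2_neq0 // expf_neq0.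
  split; first by rewrite !coprimepMl cQ1 cE.
  rewrite fld1 ?toRF_neq0 ?Q2_neq0 //.
  by rewrite !toRFM tr toRFX.
- exists (\prod_(i < k) ((1 - 'X^(p - (2 * i + 1))) * (1 - 'X^(p + (2 * i + 1)))) * (Q2 k * EE (2 * k) ^+ 2)
     - (-1) ^+ k * (OO k * EE (2 * k)) * 'X^(k * p - k ^ 2) * Q2 (2 * k)),
   (Q2 (2 * k) * (Q2 k * EE (2 * k) ^+ 2)).
  split; first by rewrite !mulf_neq0 ?Q2_neq0 // expf_neq0.
  split; first by rewrite !coprimepMl cQ1 cQ2 cE.
  split.
    have -> : (-1) ^+ k * (OO k * EE (2 * k)) * 'X^(k * p - k ^ 2) * Q2 (2 * k) =
      \prod_(i < k) (- ('X^(p - (2 * i + 1)) * (1 - 'X^(2 * i + 1)) ^+ 2)) * (Q2 k * EE (2 * k) ^+ 2).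
      rewrite prodB_eq; last by lia.
      rewrite Q2_split; ring.
    rewrite -mulrBl; apply: dvdp_mulr.
    apply: (@dvd_prod_diff _ k (fun i => (1 - 'X^(p - (2 * i + 1))) * (1 - 'X^(p + (2 * i + 1))))
                          (fun i => - ('X^(p - (2 * i + 1)) * (1 - 'X^(2 * i + 1)) ^+ 2))).
    by move=> i hi; apply: AB_dvd; lia.
  rewrite fld2 ?toRF_neq0 ?Q2_neq0 //.
  by rewrite toRFB !toRFM tr !toRFX.
Qed.
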